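(* Let $r\ge1$ and let $\lambda,\mu$ be pre-partitions of length at most $r$ with $\lambda\lhd\mu$. Then there exists a finite sequence of pre-partitions of length at most $r$, \[ \lambda=\nu^m\lhd\nu^{m-1}\lhd\cdots\lhd\nu^1\lhd\nu^0=\mu, \] such that for each $i$, $\nu^i$ is obtained from $\nu^{i-1}$ via a simple removal, an infinite removal, a slip, or a fall.
   Context: Let $\overline{\mathbb N}=\mathbb N\cup\{\infty\}$ with $\infty>n$ and $\infty+n=\infty$ for all $n$. A pre-partition of length at most $r$ is a non-increasing sequence $\lambda=(\lambda_1\ge\lambda_2\ge\dots\ge\lambda_r\ge0)$ in $\overline{\mathbb N}$ (all later terms being $0$). Co-domination: $\lambda\lhd\mu$ iff $\lambda_i+\lambda_{i+1}+\dots+\lambda_r\le\mu_i+\mu_{i+1}+\dots+\mu_r$ for all $i$. For pre-partitions $\lambda,\mu$: $\lambda$ is obtained from $\mu$ by a simple removal if, with $j$ the smallest index such that $\mu_j$ is finite, $\lambda_j=\mu_j-1$ and $\lambda_i=\mu_i$ for $i\ne j$; by an infinite removal if, with $j$ the largest index such that $\mu_j=\infty$, $\lambda_j<\mu_j=\infty$ and $\lambda_i=\mu_i$ for $i\ne j$; by a slip if for some $j\ge1$, $\lambda_{j+1}=\mu_{j+1}-1$, $\lambda_j=\mu_j+1$ and $\lambda_i=\mu_i$ for $i\notin\{j,j+1\}$; by a fall if for some $j<k$, $\lambda_k=\mu_k-1$, $\lambda_j=\mu_j+1$, $\lambda_i=\mu_i$ for $i\notin\{j,k\}$, and $\mu_i=\mu_{i'}$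 for all $i,i'\in\{j,\dots,k\}$. *)

(* Defs.v *)
From mathcomp Require Import all_boot.
Set Implicit Arguments. Unset Strict Implicit. Unset Printing Implicit Defensive.

(* Extended naturals N ∪ {∞}: [Some n] is the finite value n, [None] is ∞. *)
Definition natbar := option nat.
Definition inf_nb : natbar := None.
Definition fin (n : nat) : natbar := Some n.

Definition add_nb (x y : natbar) : natbar :=
  match x, y with Some a, Some b => Some (a + b) | _, _ => None end.

Definition le_nb (x y : natbar) : bool :=
  match x, y with
  | _, None => true
  | None, Some _ => false
  | Some a, Some b => a <= b
  end.

(* A sequence of length at most r: entries indexed by 'I_r (0-based),
   all later terms being 0. *)
Definition seqr (r : nat) := 'I_r -> natbar.

Definition is_prepartition (r : nat) (l : seqr r) : Prop :=
  forall i j : 'I_r, i <= j -> le_nb (l j) (l i).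

Definition tailsum (r : nat) (l : seqr r) (i : 'I_r) : natbar :=
  \big[add_nb/fin 0]_(k < r | i <= k) l k.

Definition codom_le (r : nat) (l m : seqr r) : Prop :=
  forall i : 'I_r, le_nb (tailsum l i) (tailsum m i).

Definition simple_removal (r : nat) (l m : seqr r) : Prop :=
  exists j : 'I_r,
    [/\ m j <> inf_nb,
        (forall k : 'I_r, k < j -> m k = inf_nb),
        add_nb (l j) (fin 1) = m j &
        (forall k : 'I_r, k != j -> l k = m k)].

Definition infinite_removal (r : nat) (l m : seqr r) : Prop :=
  exists j : 'I_r,
    [/\ m j = inf_nb,
        (forall k : 'I_r, j < k -> m k <> inf_nb),
        l j <> inf_nb &
        (forall k : 'I_r, k != j -> l k = m k)].

(* l obtained from m by a slip (λ_{j+1} = μ_{j+1} - 1 read as λ_{j+1} + 1 = μ_{j+1}) *)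
Definition slip (r : nat) (l m : seqr r) : Prop :=
  exists j k : 'I_r,
    [/\ val k = (val j).+1,
        add_nb (l k) (fin 1) = m k,
        l j = add_nb (m j) (fin 1) &
        (forall i : 'I_r, i != j -> i != k -> l i = m i)].

Definition fall (r : nat) (l m : seqr r) : Prop :=
  exists j k : 'I_r,
    [/\ j < k,
        add_nb (l k) (fin 1) = m k,
        l j = add_nb (m j) (fin 1),
        (forall i : 'I_r, i != j -> i != k -> l i = m i) &
        (forall i i' : 'I_r, j <= i <= k -> j <= i' <= k -> m i = m i')].

Definition elementary_move (r : nat) (l m : seqr r) : Prop :=
  [\/ simple_removal l m, infinite_removal l m, slip l m | fall l m].

(* Main.v *)
Require Import Defs.
From HB Require Import structures.
From mathcomp Require Import all_boot zify.
From Stdlib Require Import FunctionalExtensionality.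

Definition T (r : nat) (N : nat -> nat) (x : nat) := \sum_(x <= i < r) N i.

Lemma T_rec r N x : x < r -> T r N x = N x + T r N x.+1.
Proof. by move=> h; rewrite /T big_ltn. Qed.

Lemma T_end r N x : r <= x -> T r N x = 0.
Proof. by move=> h; rewrite /T big_geq. Qed.

Lemma sum_ind x d k : \sum_(x <= i < x + d) (i == k : nat) = (x <= k < x + d).
Proof.
elim: d => [|d IH]; first by rewrite addn0 big_geq //; lia.
rewrite addnS big_nat_recr ?leq_addr //= IH.
case: (ltngtP k (x + d)) => h; lia.
Qed.

Lemma sum_ind' r x k : k < r -> \sum_(x <= i < r) (i == k : nat) = (x <= k).
Proof.
move=> hk; case: (leqP x r) => hx.
  have := sum_ind x (r - x) k; rewrite subnKC // => ->; rewrite hk andbT //.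
by rewrite big_geq ?(ltnW hx) //; lia.
Qed.

Definition mono (r a : nat) (N : nat -> nat) := forall x y, a <= x -> x <= y -> y < r -> N y <= N x.

Lemma mono_adj r a N : (forall x, a <= x -> x.+1 < r -> N x.+1 <= N x) -> mono r a N.
Proof.
move=> h x y hax hxy hy.
have: forall d, x + d < r -> N (x + d) <= N x.
  elim=> [|d IH] hd; first by rewrite addn0.
  apply: leq_trans (IH _); last lia.
  rewrite addnS; apply: h; lia.
move=> /(_ (y - x)); rewrite subnKC //; apply; lia.
Qed.

Definition mv (j k : nat) (M : nat -> nat) :=
  fun x => if x == j then (M j).+1 else if x == k then (M k).-1 else M x.

Lemma T_mv r j k M x : j < k -> k < r -> 0 < M k ->
  T r (mv j k M) x + (x <= k) = T r M x + (x <= j).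
Proof.
move=> hjk hk hM.
rewrite -(@sum_ind' r x k hk) -(@sum_ind' r x j (ltn_trans hjk hk)) /T -!big_split /=.
apply: eq_bigr => i _; rewrite /mv.
case: eqP => [->|h1]; first lia.
case: eqP => [->|h2]; first lia.
by rewrite !addn0.
Qed.

Lemma mv_ok r a j k L M :
  a <= j -> j < k -> k < r -> mono r a M ->
  (a < j -> M j < M j.-1) -> 0 < M k -> (k.+1 < r -> M k.+1 < M k) ->
  (forall i, j < i <= k -> T r L i < T r M i) ->
  [/\ mono r a (mv j k M),
      (forall x, j < x <= k -> T r L x <= T r (mv j k M) x),
      (forall x, T r (mv j k M) x <= T r M x) &
      T r (mv j k M) k < T r M k].
Proof.
move=> haj hjk hk hmo hj hMk hk1 hT; split.
- apply: mono_adj => x hax hx; rewrite /mv.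
  have hm := hmo x x.+1 hax (leqnSn x) hx.
  have hjx : x.+1 = j -> M j < M x.
    by move=> e; have := hj; rewrite -e /=; apply; lia.
  have hkx : x = k -> M x.+1 < M x by move=> e; rewrite e; apply: hk1; rewrite -e.
  repeat (case: eqP => ?); subst; lia.
- move=> x hx; have := @T_mv r j k M x hjk hk hMk; have := hT x hx; lia.
- move=> x; have := @T_mv r j k M x hjk hk hMk; lia.
- have := @T_mv r j k M k hjk hk hMk; lia.
Qed.

Definition rm (a : nat) (M : nat -> nat) := fun x => if x == a then (M a).-1 else M x.

Lemma rm_ok r a M :
  a < r -> mono r a M -> 0 < M a -> (a.+1 < r -> M a.+1 < M a) ->
  mono r a (rm a M) /\
      (forall x, T r (rm a M) x + (x <= a) = T r M x).
Proof.
move=> har hmo hMa ha1; split.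
- apply: mono_adj => x hax hx; rewrite /rm.
  have hm := hmo x x.+1 hax (leqnSn x) hx.
  have hkx : x = a -> M x.+1 < M x by move=> e; rewrite e; apply: ha1; rewrite -e.
  repeat (case: eqP => ?); subst; lia.
- move=> x; rewrite -(@sum_ind' r x a har) /T -big_split /=; apply: eq_bigr => i _; rewrite /rm.
  case: eqP => [->|h]; lia.
Qed.

Definition fmove r a (N M : nat -> nat) :=
  [\/ [/\ a < r, 0 < M a & N = rm a M],
      (exists j, [/\ a <= j, j.+1 < r, 0 < M j.+1 & N = mv j j.+1 M])
    | (exists j k, [/\ a <= j, j < k < r, 0 < M k, N = mv j k M &
                      forall i, j <= i <= k -> M i = M j])].

Lemma fin_step r a L M :
  a < r -> mono r a L -> mono r a M ->
  (forall x, a <= x < r -> T r L x <= T r M x) ->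
  (exists2 x, a <= x < r & L x != M x) ->
  exists N, [/\ mono r a N,
    (forall x, a <= x < r -> T r L x <= T r N x),
    (forall x, T r N x <= T r M x),
    (exists2 k, a <= k < r & T r N k < T r M k) &
    fmove r a N M].
Proof.
move=> har hL hM hLM [x0 hx0 hne].
have hLMa : forall x, a <= x -> T r L x <= T r M x.
  move=> x hx; case: (ltnP x r) => hxr; first by apply: hLM; rewrite hx.
  by rewrite !T_end.
have recL := @T_rec r L; have recM := @T_rec r M.
have endL := @T_end r L; have endM := @T_end r M.
pose P k := (a <= k < r) && (T r L k < T r M k).
have exP : exists k, P k.
  case: (ltnP (T r L x0) (T r M x0)) => h; first by exists x0; rewrite /P hx0 h.
  move/andP: hx0 => [hax hxr].
  have := recL _ hxr; have := recM _ hxr; have := hLMa x0 hax.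
  case: (ltnP x0.+1 r) => h1.
    have := hLMa x0.+1 (leq_trans hax (leqnSn _)) => h2 e1 h3 e2.
    exists x0.+1; rewrite /P h1 (leq_trans hax (leqnSn _)) /=.
    move: hne => /eqP hne; lia.
  rewrite (endL x0.+1 h1) (endM x0.+1 h1) => h3 e2 e1; move: hne => /eqP hne; exfalso; lia.
have ubP : forall k, P k -> k <= r by move=> k /andP[/andP[_ /ltnW]].
case: (ex_maxnP exP ubP) => km /andP[/andP[hakm hkmr] hTkm] maxkm.
have eqnext : forall k, km < k -> T r L k = T r M k.
  move=> k hk; case: (ltnP k r) => hkr; last by rewrite !T_end.
  have hak : a <= k by apply: leq_trans hakm (ltnW hk).
  have := hLMa k hak; case: (ltnP (T r L k) (T r M k)) => h; last lia.
  have := maxkm k; rewrite /P hak hkr h /= => /(_ isT); lia.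
have condkm : (0 < M km) && ((km.+1 < r) ==> (M km.+1 < M km)).
  have := recL _ hkmr; have := recM _ hkmr; have := eqnext km.+1 (ltnSn _).
  case: (ltnP km.+1 r) => h1 /= e1 e2 e3.
    have := recL _ h1; have := recM _ h1; have := eqnext km.+2 (leqnSn _).
    have := hL km km.+1 hakm (leqnSn _) h1.
    move=> e4 e5 e6 e7; apply/andP; split; lia.
  by apply/andP; split; first lia.
pose Q k := P k && ((0 < M k) && ((k.+1 < r) ==> (M k.+1 < M k))).
have exQ : exists k, Q k by exists km; rewrite /Q /P hakm hkmr hTkm condkm.
case: (ex_minnP exQ) => k0 /andP[/andP[/andP[hak0 hk0r] hTk0] /andP[hMk0 hk0c]] mink0.
have hk0c' : k0.+1 < r -> M k0.+1 < M k0 by move=> h; move: hk0c; rewrite h.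
pose R i := (a <= i) && (M i == M k0).
have exR : exists i, R i by exists k0; rewrite /R hak0 eqxx.
case: (ex_minnP exR) => j /andP[haj /eqP hMj] minj.
have hjk0 : j <= k0 by apply: minj; rewrite /R hak0 eqxx.
have const : forall i, j <= i <= k0 -> M i = M k0.
  move=> i /andP[h1 h2]; have := hM j i haj h1 (leq_ltn_trans h2 hk0r).
  have := hM i k0 (leq_trans haj h1) h2 hk0r; lia.
have hjprev : a < j -> M j < M j.-1.
  move=> haj'; case: j haj hMj minj hjk0 const haj' => // p haj hMj minj hjk0 const haj' /=.
  have := hM p p.+1 haj' (leqnSn _) (leq_ltn_trans hjk0 hk0r).
  case: (ltnP (M p.+1) (M p)) => // h1 h2.
  have : p.+1 <= p by apply: minj; rewrite /R -ltnS haj' /=; apply/eqP; lia.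
  by rewrite ltnn.
have claimC : forall i, j < i <= k0 -> T r L i < T r M i.
  move=> i hi; apply/negPn/negP => hneg.
  pose P' i := (j < i <= k0) && ~~ (T r L i < T r M i).
  have exP' : exists i, P' i by exists i; rewrite /P' hi hneg.
  have ubP' : forall i, P' i -> i <= k0 by move=> i' /andP[/andP[_ h] _].
  case: (ex_maxnP exP' ubP') => i1 /andP[/andP[hji1 hi1k0] hn1] maxi1.
  have hi1lt : i1 < k0.
    by rewrite ltn_neqAle hi1k0 andbT; apply/eqP => e; move: hn1; rewrite e hTk0.
  have hnext : T r L i1.+1 < T r M i1.+1.
    apply/negPn/negP => hn2.
    have := maxi1 i1.+1; rewrite /P' hn2 hi1lt (leq_trans hji1 (leqnSn _)) /= => /(_ isT).
    by rewrite ltnn.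
  case: i1 hji1 hi1k0 hn1 maxi1 hi1lt hnext => // p hji1 hi1k0 hn1 maxi1 hi1lt hnext.
  have hpr : p.+1 < r by apply: ltn_trans hi1lt hk0r.
  have hap : a <= p by apply: leq_trans haj _.
  have := recL _ hpr; have := recM _ hpr.
  have := recL _ (ltnW hpr); have := recM _ (ltnW hpr).
  have := hLMa p hap; have := hLMa p.+1 (leq_trans hap (leqnSn _)).
  have c1 : j <= p <= k0 by rewrite -ltnS hji1 (ltnW hi1k0).
  have c2 : j <= p.+1 <= k0 by rewrite (ltnW hji1) hi1k0.
  have := const p c1; have := const p.+1 c2.
  have := hL p p.+1 hap (leqnSn _) hpr.
  move: hn1; rewrite -leqNgt => hn1.
  lia.
case: (ltngtP j k0) hjk0 => // [hjk|ejk] _.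
  have [hmo hLN hNM hstr] := @mv_ok r a j k0 L M haj hjk hk0r hM hjprev hMk0 hk0c' claimC.
  exists (mv j k0 M); split => //.
  - move=> x /andP[hax hxr]; have := @T_mv r j k0 M x hjk hk0r hMk0.
    have := hLM x; rewrite hax hxr => /(_ isT).
    case: (ltnP j x) => h1; last lia.
    case: (leqP x k0) => h2; last lia.
    by move=> _ _; apply: hLN; rewrite h1 h2.
  - by exists k0 => //; rewrite hak0 hk0r.
  - apply: Or33; exists j, k0; split => //; first by rewrite hjk hk0r.
    by move=> i /andP[h1 h2]; rewrite (const i) ?h1 ?h2 // (const j) ?leqnn ?hjk0.
subst k0.
case: (leqP j a) => hja.
  have eja : j = a by apply/eqP; rewrite eqn_leq hja haj.
  subst j.
  have [hmo hT] := @rm_ok r a M hk0r hM hMk0 hk0c'.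
  exists (rm a M); split => //.
  - move=> x /andP[hax hxr]; have := hT x; have := hLM x; rewrite hax hxr => /(_ isT).
    case: (eqVneq x a) => [->|hxa]; last by move=> *; lia.
    move=> *; lia.
  - move=> x; have := hT x; lia.
  - by exists a => //; [rewrite leqnn | have := hT a; rewrite leqnn /=; lia].
  - by apply: Or31; split.
have hMp := hjprev hja.
clear minj R exR.
case: j hja hak0 hk0r hMk0 hk0c hk0c' hTk0 mink0 haj hMj const hjprev claimC hMp
  => // p hja hak0 hk0r hMk0 hk0c hk0c' hTk0 mink0 haj hMj const hjprev claimC /= hMp.
have hap : a <= p by rewrite -ltnS.
have hpr : p < r by apply: ltn_trans hk0r.
have eqp : T r L p = T r M p.
  have := hLM p; rewrite hap hpr => /(_ isT).
  case: (ltnP (T r L p) (T r M p)) => h; last lia.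
  have : p.+1 <= p; last by rewrite ltnn.
  apply: mink0; rewrite /Q /P hap hpr h /=; apply/andP; split; first lia.
  by rewrite hk0r.
have hprev : a < p -> M p < M p.-1.
  case: p hja hak0 hk0r hMk0 hk0c hk0c' hTk0 mink0 haj hMj const hjprev claimC hMp hap hpr eqp
    => // q hja hak0 hk0r hMk0 hk0c hk0c' hTk0 mink0 haj hMj const hjprev claimC hMp hap hpr eqp /= haq.
  have hqr : q < r by apply: ltn_trans hpr.
  have := recL _ hqr; have := recM _ hqr; have := recL _ hpr; have := recM _ hpr.
  have := hLM q; rewrite -ltnS haq hqr => /(_ isT).
  have := hL q q.+1 haq (leqnSn _) hpr.
  have := hM q q.+1 haq (leqnSn _) hpr.
  lia.
have hC : forall i, p < i <= p.+1 -> T r L i < T r M i.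
  move=> i /andP[h1 h2]; have -> : i = p.+1 by apply/eqP; rewrite eqn_leq h1 h2.
  exact: hTk0.
have [hmo hLN hNM hstr] := @mv_ok r a p p.+1 L M hap (ltnSn p) hk0r hM hprev hMk0 hk0c' hC.
exists (mv p p.+1 M); split => //.
- move=> x /andP[hax hxr]; have := @T_mv r p p.+1 M x (ltnSn p) hk0r hMk0.
  have := hLM x; rewrite hax hxr => /(_ isT).
  case: (eqVneq x p.+1) => [->|h]; first by move=> _ _; apply: hLN; rewrite ltnSn.
  move=> *; lia.
- by exists p.+1 => //; rewrite hak0 hk0r.
- by apply: Or32; exists p; split.
Qed.
Lemma add_nbA : associative add_nb.
Proof. by case=> [a|] [b|] [c|] //=; rewrite addnA. Qed.
Lemma add_nbC : commutative add_nb.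
Proof. by case=> [a|] [b|] //=; rewrite addnC. Qed.
Lemma add0nb : left_id (fin 0) add_nb.
Proof. by case. Qed.
HB.instance Definition _ := Monoid.isComLaw.Build natbar (fin 0) add_nb add_nbA add_nbC add0nb.

Lemma T1 r (l : seqr r) (i k : 'I_r) : i <= k -> l k = None -> tailsum l i = None.
Proof. by move=> hik hk; rewrite /tailsum (bigD1 k) //= hk. Qed.

Lemma T2 r (l : seqr r) (i : 'I_r) : (forall k : 'I_r, i <= k -> l k <> None) ->
  tailsum l i = Some (\sum_(k < r | i <= k) odflt 0 (l k)).
Proof.
move=> h; rewrite /tailsum.
rewrite (eq_bigr (fun k => fin (odflt 0 (l k)))); last first.
  by move=> k /h; case: (l k).
by apply/esym; apply: (big_morph fin) => //.
Qed.

Definition mk r (a : nat) (N : nat -> nat) : seqr r :=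
  fun x => if x < a then None else Some (N x).

Lemma TS r a N (i : 'I_r) : tailsum (mk r a N) i = if i < a then None else Some (T r N i).
Proof.
case: ltnP => h; first by apply: (@T1 _ _ i i (leqnn i)); rewrite /mk h.
rewrite T2; last by move=> k hk; rewrite /mk ltnNge (leq_trans h hk).
congr Some; rewrite /T big_geq_mkord; apply: eq_bigr => k /= hk.
by rewrite /mk ltnNge (leq_trans h hk).
Qed.

Lemma P1 n a N : is_prepartition (mk n.+1 a N) -> mono n.+1 a N.
Proof.
move=> h x y hax hxy hy.
have hx : x < n.+1 by apply: leq_ltn_trans hy.
have := h (inord x) (inord y); rewrite !inordK // => /(_ hxy).
by rewrite /mk !inordK // !ltnNge hax (leq_trans hax hxy).
Qed.

Lemma P2 n a N : mono n.+1 a N -> is_prepartition (mk n.+1 a N).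
Proof.
move=> h i j hij; rewrite /mk.
case: (ltnP j a) => hj; first by rewrite (leq_ltn_trans hij hj).
case: (ltnP i a) => hi //=; apply: h => //; exact: ltn_ord.
Qed.

Lemma C1 n a N1 N2 : codom_le (mk n.+1 a N1) (mk n.+1 a N2) ->
  forall x, a <= x < n.+1 -> T n.+1 N1 x <= T n.+1 N2 x.
Proof.
move=> h x /andP[hax hx]; have := h (inord x); rewrite !TS !inordK //.
by rewrite ltnNge hax.
Qed.

Lemma C2 n a N1 N2 : (forall x, a <= x < n.+1 -> T n.+1 N1 x <= T n.+1 N2 x) ->
  codom_le (mk n.+1 a N1) (mk n.+1 a N2).
Proof.
move=> h x; rewrite !TS; case: ltnP => // hx /=; apply: h; by rewrite hx ltn_ord.
Qed.

Lemma Mv n a N M : fmove n.+1 a N M -> elementary_move (mk n.+1 a N) (mk n.+1 a M).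
Proof.
case.
- move=> [har hMa ->]; apply: Or41; exists (Ordinal har); split => /=.
  + by rewrite /mk /= ltnn.
  + by move=> k /= hk; rewrite /mk hk.
  + by rewrite /mk /= ltnn /rm eqxx /= addn1 prednK.
  + move=> k hk; rewrite /mk /rm; case: ltnP => //= _.
    have -> // : (val k == a) = false.
    by apply/negbTE; apply: contra hk => /eqP e; apply/eqP; apply: val_inj.
- move=> [j [haj hjr hM ->]]; apply: Or43.
  exists (Ordinal (ltnW hjr)), (Ordinal hjr); split => //=.
  + rewrite /mk /= ltnNge (leq_trans haj (leqnSn _)) /= /mv eqxx.
    by rewrite (gtn_eqF (ltnSn j)) /= addn1 prednK.
  + by rewrite /mk /mv /= eqxx; case: ltnP => h //=; rewrite addn1.
  + move=> i hij hik; rewrite /mk /mv; case: ltnP => //= _.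
    have -> : (val i == j) = false.
      by apply/negbTE; apply: contra hij => /eqP e; apply/eqP; apply: val_inj.
    have -> // : (val i == j.+1) = false.
    by apply/negbTE; apply: contra hik => /eqP e; apply/eqP; apply: val_inj.
- move=> [j [k [haj /andP[hjk hkr] hM -> hc]]]; apply: Or44.
  exists (Ordinal (ltn_trans hjk hkr)), (Ordinal hkr); split => //=.
  + rewrite /mk /= ltnNge (leq_trans haj (ltnW hjk)) /= /mv eqxx.
    by rewrite (gtn_eqF hjk) /= addn1 prednK.
  + by rewrite /mk /mv /= eqxx; case: ltnP => h //=; rewrite addn1.
  + move=> i hij hik; rewrite /mk /mv; case: ltnP => //= _.
    have -> : (val i == j) = false.
      by apply/negbTE; apply: contra hij => /eqP e; apply/eqP; apply: val_inj.
    have -> // : (val i == k) = false.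
    by apply/negbTE; apply: contra hik => /eqP e; apply/eqP; apply: val_inj.
  + move=> i i' /andP[h1 h2] /andP[h3 h4]; rewrite /mk.
    rewrite ltnNge (leq_trans haj h1) ltnNge (leq_trans haj h3) /=.
    by rewrite hc ?h1 ?h2 // hc ?h3 ?h4.
Qed.

Definition nNone r (l : seqr r) := #|[pred x | l x == None]|.
Definition Dm r (l : seqr r) := \sum_(x < r) odflt 0 (tailsum l x).
Arguments Dm {r}. Arguments nNone {r}.

Lemma sum_lt r (F G : 'I_r -> nat) i0 : (forall i, F i <= G i) -> F i0 < G i0 ->
  \sum_i F i < \sum_i G i.
Proof.
move=> h h0; rewrite (bigD1 i0) // [X in _ < X](bigD1 i0) //=.
rewrite -addSn; apply: leq_add => //; apply: leq_sum => i _; exact: h.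
Qed.

Lemma Dmk n a N M : (forall x, T n.+1 N x <= T n.+1 M x) ->
  (exists2 k, a <= k < n.+1 & T n.+1 N k < T n.+1 M k) ->
  Dm (mk n.+1 a N) < Dm (mk n.+1 a M).
Proof.
move=> h [k /andP[hak hk] hs]; rewrite /Dm; apply: (@sum_lt _ _ _ (inord k)).
  by move=> i; rewrite !TS; case: (i < a) => //=; exact: h.
rewrite !TS inordK //; have -> : (k < a) = false by lia. by [].
Qed.

Lemma nNone_mk r a N M : nNone (mk r a N) = nNone (mk r a M).
Proof. by apply: eq_card => x; rewrite /mk !inE; case: ltnP. Qed.

Lemma prepN r (l : seqr r) (x y : 'I_r) : is_prepartition l -> y <= x -> l x = None -> l y = None.
Proof. by move=> h hyx hx; have := h y x hyx; rewrite hx; case: (l y). Qed.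

Lemma prepS r (l : seqr r) (x y : 'I_r) : is_prepartition l -> x <= y -> l x <> None -> l y <> None.
Proof. by move=> h hxy hx hy; apply: hx; apply: (@prepN _ l y x h hxy hy). Qed.

Arguments prepN {r l x y}. Arguments prepS {r l x y}.

Lemma le_nb_refl x : le_nb x x.
Proof. by case: x => //= ?; rewrite leqnn. Qed.

Lemma inf_step n (lam mu : seqr n.+1) (x0 : 'I_n.+1) :
  is_prepartition lam -> is_prepartition mu -> codom_le lam mu ->
  lam x0 <> None -> mu x0 = None ->
  exists nu, [/\ is_prepartition nu, codom_le lam nu, codom_le nu mu,
                 elementary_move nu mu & nNone nu < nNone mu].
Proof.
move=> hlam hmu hcod hx0 hx0mu.
have Pj : (fun x => mu x == None) x0 by apply/eqP.
case: (@arg_maxnP _ x0 (fun x => mu x == None) (fun x => val x) Pj) => j /eqP hj hmax.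
have hgt : forall k : 'I_n.+1, j < k -> mu k <> None.
  by move=> k hk hk'; have := hmax k (introT eqP hk'); rewrite /geq /=; lia.
have hx0j : x0 <= j := hmax x0 Pj.
have hlj : lam j <> None := prepS hlam hx0j hx0.
pose V := odflt 0 (tailsum lam j) + \sum_(k < n.+1 | j < k) odflt 0 (mu k).
pose nu := fun x => if x == j then fin V else mu x.
have hnuj : nu j = fin V by rewrite /nu eqxx.
have hnuk : forall k, k != j -> nu k = mu k by move=> k hk; rewrite /nu (negbTE hk).
have hsame : forall i : 'I_n.+1, j < i -> tailsum nu i = tailsum mu i.
  move=> i hi; apply: eq_bigr => k hk; apply: hnuk.
  by apply/eqP => e; move: hk hi; rewrite e; lia.
have hlt : forall i : 'I_n.+1, i < j -> nu i = None.
  move=> i hi; rewrite hnuk; last by apply/eqP => e; move: hi; rewrite e ltnn.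
  exact: (prepN hmu (ltnW hi) hj).
exists nu; split.
- move=> i i' hii'.
  case: (eqVneq i' j) => [ei'|hi'j].
    subst i'; case: (eqVneq i j) => [->|hij]; first exact: le_nb_refl.
    rewrite (hlt i) //; last by rewrite ltn_neqAle hii' andbT; apply/eqP => e; apply: (negP hij); apply/eqP; apply: val_inj.
    by case: (nu j).
  rewrite (hnuk i' hi'j).
  case: (eqVneq i j) => [ei|hij]; last by rewrite hnuk //; apply: hmu.
  subst i; rewrite hnuj.
  have hji' : j < i' by rewrite ltn_neqAle hii' andbT; apply/eqP => e; apply: (negP hi'j); apply/eqP; apply: val_inj.
  have := hgt i' hji'; case E: (mu i') => [v|] // _ /=.
  have : odflt 0 (mu i') <= \sum_(k < n.+1 | j < k) odflt 0 (mu k) by rewrite (bigD1 i') //= leq_addr.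
  by rewrite E /= /V => h; apply: leq_trans h (leq_addl _ _).
- move=> i; case: (ltngtP i j) => h.
  + by rewrite (@T1 _ nu i i (leqnn _) (hlt i h)); case: (tailsum lam i).
  + by rewrite hsame //; apply: hcod.
  + have ei : i = j by apply: val_inj.
    subst i.
    rewrite (@T2 _ nu j); last first.
      move=> k hk; case: (eqVneq k j) => [->|hkj]; first by rewrite hnuj.
      rewrite hnuk //; apply: hgt; rewrite ltn_neqAle hk andbT; apply/eqP => e; apply: (negP hkj); apply/eqP; by apply: val_inj; rewrite /= e.
    rewrite (@T2 _ lam j); last by move=> k hk; apply: (prepS hlam hk).
    have eT := @T2 _ lam j (fun k hk => prepS hlam hk hlj).
    rewrite /= [X in _ <= X](bigD1 j) //= hnuj /= /V eT /=.
    by rewrite -addnA leq_addr.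
- move=> i; case: (leqP i j) => h.
    by rewrite (@T1 _ mu i j h hj); case: (tailsum nu i).
  by rewrite hsame //; apply: le_nb_refl.
- apply: Or42; exists j; split => //; first by rewrite hnuj.
- apply: proper_card; apply/properP; split.
    by apply/subsetP => x; rewrite !inE /nu; case: (x == j).
  by exists j; rewrite !inE ?hnuj ?hj.
Qed.

Arguments P1 {n a N}. Arguments P2 {n a N}. Arguments C1 {n a N1 N2}. Arguments C2 {n a N1 N2}.
Arguments Mv {n a N M}. Arguments Dmk {n a N M}. Arguments inf_step {n lam mu x0}.

Lemma fin_case n (lam mu : seqr n.+1) (y : 'I_n.+1) :
  is_prepartition lam -> is_prepartition mu -> codom_le lam mu ->
  (forall x, lam x <> None -> mu x <> None) -> lam y <> mu y ->
  exists nu, [/\ is_prepartition nu, codom_le lam nu, codom_le nu mu,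
                 elementary_move nu mu & nNone nu = nNone mu /\ Dm nu < Dm mu].
Proof.
move=> hlam hmu hcod hLM hne.
have hmy : mu y <> None.
  move=> e; apply: hne; rewrite e; case E: (lam y) => [v|] //.
  by exfalso; apply: (hLM y); rewrite ?E.
pose Pa k := (k < n.+1) && (mu (inord k) != None).
have exPa : exists k, Pa k by exists y; rewrite /Pa ltn_ord inord_val; apply/eqP.
case: (ex_minnP exPa) => a /andP[har hmua] mina.
have muNone : forall x : 'I_n.+1, x < a -> mu x = None.
  move=> x hx; apply/eqP; apply/negPn/negP => h.
  have := mina x; rewrite /Pa ltn_ord inord_val h => /(_ isT); lia.
have muSome : forall x : 'I_n.+1, a <= x -> mu x <> None.
  move=> x hx; apply: (@prepS _ mu (inord a) x hmu); rewrite ?inordK //; exact/eqP.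
have lamNone : forall x : 'I_n.+1, x < a -> lam x = None.
  by move=> x hx; case E: (lam x) => [v|] //; exfalso; apply: (hLM x); rewrite ?E // muNone.
have lamSome : forall x : 'I_n.+1, a <= x -> lam x <> None.
  move=> x hx hl; have := hcod x; rewrite (@T1 _ lam x x (leqnn _) hl) (@T2 _ mu x) //.
  by move=> k hk; apply: muSome; apply: leq_trans hx hk.
pose L k := odflt 0 (lam (inord k)); pose M k := odflt 0 (mu (inord k)).
have eL : lam = mk n.+1 a L.
  apply: functional_extensionality => x; rewrite /mk /L inord_val.
  case: ltnP => h; first exact: lamNone.
  by have := lamSome x h; case: (lam x).
have eM : mu = mk n.+1 a M.
  apply: functional_extensionality => x; rewrite /mk /M inord_val.
  case: ltnP => h; first exact: muNone.
  by have := muSome x h; case: (mu x).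
have hay : a <= y by case: (ltnP y a) => // h; exfalso; apply: hmy; apply: muNone.
have hdiff : exists2 x, a <= x < n.+1 & L x != M x.
  exists y; first by rewrite hay ltn_ord.
  apply/eqP => e; apply: hne; rewrite eL eM /mk; case: ltnP => //= _.
  by rewrite /L /M !inord_val in e *; rewrite e.
rewrite eL eM in hlam hmu hcod *.
have [N [hmo hLN hNM hstr hmv]] := @fin_step n.+1 a L M har (P1 hlam) (P1 hmu) (C1 hcod) hdiff.
exists (mk n.+1 a N); split.
- exact: P2.
- exact: C2.
- by apply: C2 => x _; apply: hNM.
- exact: Mv.
- by split; [apply: nNone_mk | apply: Dmk].
Qed.

Arguments fin_case {n lam mu y}.

Lemma step n (lam mu : seqr n.+1) :
  is_prepartition lam -> is_prepartition mu -> codom_le lam mu ->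
  (exists y, lam y <> mu y) ->
  exists nu, [/\ is_prepartition nu, codom_le lam nu, codom_le nu mu,
                 elementary_move nu mu &
                 nNone nu < nNone mu \/ (nNone nu = nNone mu /\ Dm nu < Dm mu)].
Proof.
move=> hlam hmu hcod [y hy].
case: (boolP [exists x, (lam x != None) && (mu x == None)]).
  move/existsP => [x /andP[/eqP h1 /eqP h2]].
  have [nu [? ? ? ? ?]] := inf_step hlam hmu hcod h1 h2.
  by exists nu; split => //; left.
rewrite negb_exists => /forallP h.
have hLM : forall x, lam x <> None -> mu x <> None.
  move=> x h1 h2; have := h x; rewrite h2 eqxx andbT => /negPn /eqP; exact: h1.
have [nu [? ? ? ? ?]] := fin_case hlam hmu hcod hLM hy.
by exists nu; split => //; right.
Qed.

Arguments step {n lam mu}.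

Lemma main n (lam : seqr n.+1) : is_prepartition lam ->
  forall mu, is_prepartition mu -> codom_le lam mu ->
  exists (m : nat) (nu : nat -> seqr n.+1),
    [/\ nu 0 = mu, nu m = lam &
        (forall i, 0 < i <= m ->
           [/\ is_prepartition (nu i), codom_le (nu i) (nu i.-1) &
               elementary_move (nu i) (nu i.-1)])].
Proof.
move=> hlam.
suff H : forall c1 c2 mu, nNone mu < c1 -> Dm mu < c2 ->
  is_prepartition mu -> codom_le lam mu ->
  exists (m : nat) (nu : nat -> seqr n.+1),
    [/\ nu 0 = mu, nu m = lam &
        (forall i, 0 < i <= m ->
           [/\ is_prepartition (nu i), codom_le (nu i) (nu i.-1) &
               elementary_move (nu i) (nu i.-1)])].
  by move=> mu; apply: (H _ _ mu (ltnSn _) (ltnSn _)).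
elim=> [|c1 IH1] // c2; elim: c2 => [|c2 IH2] // mu h1 h2 hmu hcod.
case: (boolP [forall x, lam x == mu x]) => hall.
  have e : lam = mu.
    by apply: functional_extensionality => x; apply/eqP; move/forallP: hall.
  exists 0, (fun _ => mu); split => //.
  by move=> i; rewrite ltnNge andbC; case: (i <= 0).
have hy : exists y, lam y <> mu y.
  by move: hall; rewrite negb_forall => /existsP [y /eqP hy]; exists y.
have [nu [hnu hln hnm hmv hmeas]] := step hlam hmu hcod hy.
have [m [s [s0 sm hs]]] : exists (m : nat) (s : nat -> seqr n.+1),
    [/\ s 0 = nu, s m = lam &
        (forall i, 0 < i <= m ->
           [/\ is_prepartition (s i), codom_le (s i) (s i.-1) &
               elementary_move (s i) (s i.-1)])].
  case: hmeas => [hlt | [heq hD]].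
    apply: (IH1 (Dm nu).+1 nu) => //; lia.
  by apply: (IH2 nu) => //; [rewrite heq | lia].
exists m.+1, (fun i => if i is i'.+1 then s i' else mu); split => //.
move=> [|i] // /andP[_ hi]; case: i hi => [|i] hi /=.
  by rewrite s0; split.
exact: hs.
Qed.

Theorem theorem2p1 (r : nat) (lam mu : 'I_r -> natbar) :
  0 < r ->
  is_prepartition lam -> is_prepartition mu ->
  codom_le lam mu ->
  exists (m : nat) (nu : nat -> 'I_r -> natbar),
    [/\ (forall k, nu 0 k = mu k),
        (forall k, nu m k = lam k) &
        (forall i, 0 < i <= m ->
           [/\ is_prepartition (nu i),
               codom_le (nu i) (nu i.-1) &
               elementary_move (nu i) (nu i.-1)])].
Proof.
case: r lam mu => [|n] lam mu // _ hlam hmu hcod.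
have [m [s [e0 em hs]]] := @main n lam hlam mu hmu hcod.
by exists m, s; split => // k; rewrite ?e0 ?em.
Qed.
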